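(* Let $\phi=(\phi_i)_{i\ge1}$ be a sequence of real numbers and define $\mathcal{H}_0^{\phi}=1$ and, for $n\ge0$, $\mathcal{H}_{n+1}^{\phi}(x)=2x\mathcal{H}_n^{\phi}(x)-(\mathcal{H}_n^{\phi})'(x)+\phi_{n+1}\mathcal{H}_n^{\phi}(x)$ (so $\mathcal{H}_n^\phi$ has degree $n$ and depends only on $\phi_1,\dots,\phi_n$). For $l\ge1$ let $\phi^{\{l\}}$ be the sequence obtained from $\phi$ by removing $\phi_l$ ($\phi^{\{l\}}_i=\phi_i$ for $i<l$, $\phi^{\{l\}}_i=\phi_{i+1}$ for $i\ge l$), and for a real $M$ let $\phi^{l,M}$ be the sequence $\phi^{l,M}_i=\phi_i+M\delta_{i,l}$. Then: (1) For every $n\ge0$, $\mathcal{H}_n^\phi$ has $n$ real and simple zeros, and for every $l\ge1$ the zeros of $\mathcal{H}_{n+1}^\phi$ interlace the zeros of $\mathcal{H}_n^{\phi^{\{l\}}}$. (2) Let $\zeta_k(n,\phi)$, $1\le k\le n$, denote the $k$-th zero of $\mathcal{H}_n^\phi$ in increasing order. If $\phi$ and $\rho$ are real sequences with $\phi_j\le\rho_j$ for all $j\ge1$, then $\zeta_k(n,\rho)\le\zeta_k(n,\phi)$ for all $1\le k\le n$. (3) Let $l\le n$ be positive integers and $M\neq0$ real. If $M>0$, the zeros of $\mathcal{H}_n^{\phi^{l,M}}$ interlace the zeros of $\mathcal{H}_n^\phi$; if $M<0$, the zeros of $\mathcal{H}_n^{\phi}$ interlace the zeros of $\mathcal{H}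_n^{\phi^{l,M}}$.
   Context: $\delta_{i,l}$ is the Kronecker delta. Interlacing: given two finite sets $U,V$ of real numbers, $U$ (strictly) interlaces $V$ if $\min U<\min V$ and between any two consecutive elements of either of the two sets there is an element of the other; ''the zeros of $p$ interlace the zeros of $q$'' means the corresponding sets of zeros satisfy this. *)

(* Defs.v *)
From HB Require Import structures.
From mathcomp Require Import all_boot all_order all_algebra.
From mathcomp Require Export reals.
Set Implicit Arguments. Unset Strict Implicit. Unset Printing Implicit Defensive.
Import Order.TTheory GRing.Theory Num.Theory.
Local Open Scope ring_scope.

(* Sequences phi = (phi_i)_{i>=1} are functions nat -> R; phi 0 is unused. *)

Fixpoint Hpoly (R : realType) (phi : nat -> R) (n : nat) : {poly R} :=
  match n with
  | 0 => 1
  | m.+1 => 2%:R *: ('X * Hpoly phi m) - (Hpoly phi m)^`() + (phi m.+1)%:P * Hpoly phi m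
  end.

Definition remove_at (R : realType) (phi : nat -> R) (l : nat) : nat -> R :=
  fun i => if (i < l)%N then phi i else phi i.+1.

Definition perturb (R : realType) (phi : nat -> R) (l : nat) (M : R) : nat -> R :=
  fun i => phi i + (if i == l then M else 0).

Definition interlace (R : realType) (U V : R -> bool) : Prop :=
  (exists2 u, U u & forall v, V v -> u < v) /\
  (forall a b, U a -> U b -> a < b -> (forall c, U c -> ~ (a < c < b)) ->
     exists2 v, V v & a < v < b) /\
  (forall a b, V a -> V b -> a < b -> (forall c, V c -> ~ (a < c < b)) ->
     exists2 u, U u & a < u < b).

Definition zero_seq (R : realType) (p : {poly R}) (s : seq R) : Prop :=
  sorted <%R s /\ forall x, root p x = (x \in s).

(* Main.v *)
From HB Require Import structures.
From mathcomp Require Import all_boot all_order all_algebra reals.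
From mathcomp Require Import polyrcf.
From mathcomp Require Import ring lra zify.
Require Import Defs.
Import Order.TTheory GRing.Theory Num.Theory.
Local Open Scope ring_scope.

Section S.
Context {R : realType}.
Implicit Types (p q : {poly R}) (c : R).

Definition Top c p : {poly R} := 2%:R *: ('X * p) - p^`() + c%:P * p.

Lemma HpolyS (phi : nat -> R) n : Hpoly phi n.+1 = Top (phi n.+1) (Hpoly phi n).
Proof. by []. Qed.

Lemma Tcomm a b p : Top a (Top b p) = Top b (Top a p).
Proof. rewrite /Top -!mul_polyC !derivE; ring. Qed.

Lemma hornerTop c q x : (Top c q).[x] = (2%:R * x + c) * q.[x] - (q^`()).[x].
Proof. rewrite /Top !(hornerD, hornerN, hornerZ, hornerM, hornerX, hornerC); ring. Qed.

Lemma TopE c q : Top c q = (2%:R *: 'X + c%:P) * q - q^`().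
Proof. rewrite /Top -!mul_polyC; ring. Qed.

Lemma size_lin c : size (2%:R *: 'X + c%:P : {poly R}) = 2%N /\
   lead_coef (2%:R *: 'X + c%:P : {poly R}) = 2%:R.
Proof.
have h2 : (2%:R : R) != 0 by rewrite pnatr_eq0.
have hs : size (2%:R *: 'X : {poly R}) = 2%N by rewrite size_scale // size_polyX.
have hlt : (size (c%:P) < size (2%:R *: 'X : {poly R}))%N.
  by rewrite hs; apply: (leq_ltn_trans (size_polyC_leq1 c)).
by rewrite size_addl // lead_coefDl // lead_coefZ lead_coefX mulr1.
Qed.

Lemma Top_size c q : q != 0 ->
  size (Top c q) = (size q).+1 /\ lead_coef (Top c q) = 2%:R * lead_coef q.
Proof.
move=> q0; have [hs hl] := size_lin c.
have A0 : (2%:R *: 'X + c%:P : {poly R}) != 0 by rewrite -size_poly_gt0 hs.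
have sA : size ((2%:R *: 'X + c%:P) * q) = (size q).+1.
  by rewrite size_mul // hs.
have hlt : (size (- q^`()) < size ((2%:R *: 'X + c%:P) * q)%R)%N.
  by rewrite size_polyN sA; apply: (ltn_trans (lt_size_deriv q0)).
by rewrite TopE size_addl // lead_coefDl // lead_coefM hl.
Qed.

Lemma eq_Hpoly (phi psi : nat -> R) n :
  (forall i, (0 < i <= n)%N -> phi i = psi i) -> Hpoly phi n = Hpoly psi n.
Proof.
elim: n => [//|n IH] h; rewrite !HpolyS (h n.+1) ?leqnn // IH //.
by move=> i /andP[i0 iN]; apply: h; rewrite i0 (leq_trans iN).
Qed.

Lemma Hrem {phi : nat -> R} {n l} : (1 <= l <= n.+1)%N ->
  Hpoly phi n.+1 = Top (phi l) (Hpoly (remove_at phi l) n).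
Proof.
elim: n l => [|n IH] l.
  by rewrite -eqn_leq => /eqP <-.
move=> /andP[l1 ln]; rewrite leq_eqVlt in ln; case/orP: ln => [/eqP ->|ln].
  rewrite HpolyS; congr Top; apply: eq_Hpoly => i /andP[_ i0].
  by rewrite /remove_at ltnS i0.
rewrite HpolyS (IH l) ?l1 // Tcomm; congr Top.
by rewrite HpolyS /remove_at ltnNge -ltnS ln.
Qed.

Lemma Hrem_ex (phi : nat -> R) n l : (1 <= l)%N ->
  exists c, Hpoly phi n.+1 = Top c (Hpoly (remove_at phi l) n).
Proof.
move=> l1; case: (leqP l n.+1) => ln.
  by exists (phi l); apply: Hrem; rewrite l1.
exists (phi n.+1); rewrite HpolyS; congr Top; apply: eq_Hpoly => i /andP[_ i0].
by rewrite /remove_at (leq_ltn_trans i0 (ltnW ln)).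
Qed.

Lemma size_H (phi : nat -> R) n : size (Hpoly phi n) = n.+1 /\ 0 < lead_coef (Hpoly phi n).
Proof.
elim: n => [|n [IHs IHl]]; first by rewrite /= size_poly1 lead_coef1.
have q0 : Hpoly phi n != 0 by rewrite -size_poly_gt0 IHs.
by have [-> ->] := Top_size (phi n.+1) _ q0; rewrite IHs mulr_gt0.
Qed.


Definition rr p (s : seq R) :=
  [/\ sorted <%R s, size s = (size p).-1, all (root p) s & 0 < lead_coef p].

Lemma ltr_trans_rel : transitive (@Order.lt _ R).
Proof. by move=> y x z; apply: lt_trans. Qed.

Lemma sorted_lt_uniq (s : seq R) : sorted <%R s -> uniq s.
Proof. by apply: sorted_uniq; [exact: ltr_trans_rel | move=> x; exact: ltxx]. Qed.

Lemma rr_neq0 {p s} : rr p s -> p != 0.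
Proof. by case=> _ _ _ h; rewrite -lead_coef_eq0 gt_eqF. Qed.

Lemma rr_root {p s} : rr p s -> forall x, root p x = (x \in s).
Proof.
move=> h x; have p0 := rr_neq0 h; case: h => so sz al _.
apply/idP/idP; last by move=> xs; exact: (allP al).
move=> rx; apply/negPn/negP => xs.
have := max_poly_roots p0 (_ : all (root p) (x :: s)).
rewrite /= xs sorted_lt_uniq // rx al /= sz => /(_ isT isT).
by rewrite prednK ?ltnn // size_poly_gt0.
Qed.

Lemma rr_fact {p s} : rr p s -> p = lead_coef p *: \prod_(x <- s) ('X - x%:P).
Proof.
move=> h; have p0 := rr_neq0 h; case: h => so sz al _.
have us : poly.uniq_roots s by rewrite uniq_rootsE sorted_lt_uniq.
have [q hq] := uniq_roots_prod_XsubC al us.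
have q0 : q != 0 by apply: contraNneq p0 => q0; rewrite hq q0 mul0r.
have sq : size q = 1%N.
  have P0 : \prod_(z <- s) ('X - z%:P) != 0 :> {poly R}.
    by apply: monic_neq0; apply: monic_prod_XsubC.
  have := congr1 (fun r : {poly R} => size r) hq; rewrite /= size_mul //.
  rewrite size_prod_XsubC sz prednK ?size_poly_gt0 //.
  have : (0 < size q)%N by rewrite size_poly_gt0.
  case: (size q) => [//|k] _; rewrite addSn /= => /eqP.
  by rewrite -{1}[size p]add0n eqn_add2r eq_sym => /eqP ->.
have [c c0 qc] : exists2 c, c != 0 & q = c%:P.
  by move/eqP: sq => /size_poly1P.
by rewrite hq qc lead_coefM lead_coefC lead_coef_prod_XsubC mulr1 mul_polyC.
Qed.

Lemma rr_uniq {p s s'} : rr p s -> rr p s' -> s = s'.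
Proof.
move=> h h'; apply: (irr_sorted_eq ltr_trans_rel); first by move=> x; exact: ltxx.
- by case: h.
- by case: h'.
by move=> x; rewrite -(rr_root h) -(rr_root h').
Qed.

Lemma sgn_prod (s : seq R) x : x \notin s ->
  0 < (-1) ^+ (count (fun y => x < y) s) * \prod_(y <- s) (x - y).
Proof.
elim: s => [|a s IH]; first by rewrite big_nil expr0 mulr1.
rewrite inE negb_or => /andP[xa xs]; rewrite big_cons /= exprD.
have := IH xs; case: (ltrP x a) => ha hb.
  rewrite expr1 mulrACA; apply: mulr_gt0 => //; rewrite mulN1r oppr_gt0 subr_lt0 //.
rewrite expr0 mul1r mulrCA; apply: mulr_gt0 => //; rewrite subr_gt0 lt_neqAle ha.
by rewrite eq_sym xa.
Qed.

Lemma sgn_eval {p s x} : rr p s -> x \notin s ->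
  0 < p.[x] * (-1) ^+ (count (fun y => x < y) s).
Proof.
move=> h xs; rewrite (rr_fact h) hornerZ horner_prod.
under eq_bigr do rewrite hornerXsubC.
rewrite -mulrA; apply: mulr_gt0; first by case: h.
by rewrite mulrC sgn_prod.
Qed.

Lemma sgn_deriv {p s x} : rr p s -> x \in s ->
  0 < (p^`()).[x] * (-1) ^+ (count (fun y => x < y) s).
Proof.
move=> h xs; have us : uniq s by case: h => /sorted_lt_uniq.
rewrite (rr_fact h) (big_rem _ xs) /= derivZ derivM hornerZ hornerD !hornerM.
rewrite hornerXsubC subrr mul0r addr0 derivXsubC hornerC mul1r horner_prod.
under eq_bigr do rewrite hornerXsubC.
rewrite ((permP (perm_to_rem xs)) (fun y => x < y)) /= ltxx add0n.
rewrite -mulrA; apply: mulr_gt0; first by case: h.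
by rewrite mulrC sgn_prod // mem_rem_uniqF.
Qed.

Lemma count_split {r : seq R} {x k} : (k <= size r)%N ->
  (forall i, (i < k)%N -> nth 0 r i <= x) ->
  (forall i, (k <= i < size r)%N -> x < nth 0 r i) ->
  count (fun y => x < y) r = (size r - k)%N.
Proof.
elim: r k => [|a r IH] k; first by rewrite leqn0 => /eqP ->.
case: k => [|k] /= hk h1 h2.
  rewrite (h2 0%N) //= add1n subn0 (IH 0%N) ?subn0 //.
  by move=> i /andP[_ ir]; apply: (h2 i.+1).
rewrite ltNge (h1 0%N) //= add0n subSS (IH k) //.
  by move=> i ik; apply: (h1 i.+1).
by move=> i /andP[ki ir]; apply: (h2 i.+1); rewrite ltnS ki.
Qed.


Lemma sg_same (a b : R) : Num.sg a = Num.sg b -> b != 0 -> 0 < a * b.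
Proof. by move=> e b0; rewrite -sgr_gt0 sgrM e -expr2 sqr_sg b0 ltr01. Qed.

Lemma mix_neg {a b k : R} : 0 < a * k -> b * k < 0 -> a * b < 0.
Proof.
move=> h1 h2; have h3 : (a * k) * (b * k) < 0 by rewrite pmulr_rlt0.
have h4 : (a * k) * (b * k) = (a * b) * (k * k) by ring.
rewrite h4 in h3; have h5 : 0 <= k * k by rewrite -expr2 sqr_ge0.
rewrite ltNge; apply/negP => h6; move: h3; rewrite ltNge mulr_ge0 //.
Qed.

Lemma right_root p b : p != 0 -> p.[b] * lead_coef p < 0 ->
  exists2 z, b < z & root p z.
Proof.
move=> p0 h; set B := cauchy_bound p.
have lc0 : lead_coef p != 0 by rewrite lead_coef_eq0.
have hB : forall y, B <= y -> 0 < p.[y] * lead_coef p.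
  move=> y hy; apply: sg_same => //.
  by rewrite (@sgp_pinftyP _ B p (ge_cauchy_bound p0)) // in_itv /= hy.
have bB : b < B by rewrite ltNge; apply/negP => /hB; rewrite ltNge (ltW h).
have hn : p.[b] * p.[B] < 0 by rewrite mulrC; exact: mix_neg (hB B (lexx _)) h.
have [z hz rz] := poly_ivtoo (ltW bB) hn.
by exists z => //; rewrite (itvP hz).
Qed.

Lemma left_root p a : p != 0 -> p.[a] * ((-1) ^+ (size p).-1 * lead_coef p) < 0 ->
  exists2 z, z < a & root p z.
Proof.
move=> p0 h; set B := - cauchy_bound p.
have lc0 : (-1) ^+ (size p).-1 * lead_coef p != 0.
  by rewrite mulf_neq0 ?signr_eq0 // lead_coef_eq0.
have hB : forall y, y <= B -> 0 < p.[y] * ((-1) ^+ (size p).-1 * lead_coef p).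
  move=> y hy; apply: sg_same => //.
  by rewrite (@sgp_minftyP _ B p (le_cauchy_bound p0)) // in_itv /= hy.
have bB : B < a by rewrite ltNge; apply/negP => /hB; rewrite ltNge (ltW h).
have hn : p.[B] * p.[a] < 0 by exact: mix_neg (hB B (lexx _)) h.
have [z hz rz] := poly_ivtoo (ltW bB) hn.
by exists z => //; rewrite (itvP hz).
Qed.

Lemma gap_roots {p} {t : seq R} : sorted <%R t ->
  (forall i, (i.+1 < size t)%N -> p.[nth 0 t i] * p.[nth 0 t i.+1] < 0) ->
  exists g, [/\ size g = (size t).-1, all (root p) g &
    forall i, (i.+1 < size t)%N -> nth 0 t i < nth 0 g i < nth 0 t i.+1].
Proof.
elim: t => [|x t IH] /=; first by exists [::].
case: t IH => [|y t] IH; first by exists [::].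
move=> /andP[xy st] h.
have [g [sg ag hg]] := IH st (fun i hi => h i.+1 hi).
have [z hz rz] := @poly_ivtoo _ p x y (ltW xy) (h 0%N isT).
exists (z :: g); split => /=; first by rewrite sg.
  by rewrite rz ag.
case=> [|i] hi /=; first by rewrite !(itvP hz).
exact: hg.
Qed.

Definition pat (s t : seq R) :=
  [/\ (size t <= size s <= (size t).+1)%N,
      (forall i, (i < size t)%N -> nth 0 s i < nth 0 t i) &
      (forall i, (i.+1 < size s)%N -> nth 0 t i < nth 0 s i.+1)].

Lemma pat_sorted_l {s t} : pat s t -> sorted <%R s.
Proof.
case=> /andP[h1 h2] h3 h4; apply/(sortedP 0) => i hi.
apply: (lt_trans (h3 i _)); last exact: h4.
by rewrite -ltnS (leq_trans hi h2).
Qed.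

Lemma pat_sorted_r {s t} : pat s t -> sorted <%R t.
Proof.
case=> /andP[h1 h2] h3 h4; apply/(sortedP 0) => i hi.
apply: (lt_trans (h4 i _)); last exact: h3.
by rewrite (leq_trans hi h1).
Qed.

Lemma lt_nth (s : seq R) i j : sorted <%R s -> (i < j)%N -> (j < size s)%N ->
  nth 0 s i < nth 0 s j.
Proof.
move=> so ij js; apply: (sorted_ltn_nth ltr_trans_rel) => //.
by rewrite inE (ltn_trans ij js).
Qed.

Lemma le_nth (s : seq R) i j : sorted <%R s -> (i <= j)%N -> (j < size s)%N ->
  nth 0 s i <= nth 0 s j.
Proof.
rewrite leq_eqVlt => so /orP[/eqP -> //|ij] js; exact/ltW/lt_nth.
Qed.


Lemma consec {s : seq R} {a b : R} : sorted <%R s -> a \in s -> b \in s -> a < b ->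
  (forall c, c \in s -> ~ (a < c < b)) ->
  exists i, [/\ (i.+1 < size s)%N, a = nth 0 s i & b = nth 0 s i.+1].
Proof.
move=> so aS bS ab hc.
set i := index a s; set j := index b s.
have ai : a = nth 0 s i by rewrite nth_index.
have bj : b = nth 0 s j by rewrite nth_index.
have il : (i < size s)%N by rewrite index_mem.
have jl : (j < size s)%N by rewrite index_mem.
have ij : (i < j)%N.
  rewrite ltnNge; apply/negP => ji; move: ab; rewrite ai bj.
  by rewrite ltNge le_nth.
case: (ltngtP i.+1 j) => h.
- case: (hc (nth 0 s i.+1) (mem_nth 0 (ltn_trans h jl))).
  rewrite ai bj; apply/andP; split; apply: lt_nth => //; exact: ltn_trans h jl.
- by rewrite ltnS leqNgt ij in h.
by exists i; rewrite h.
Qed.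

Lemma pat_interlace {U V : R -> bool} {s t} : pat s t -> (0 < size s)%N ->
  (forall x, U x = (x \in s)) -> (forall x, V x = (x \in t)) -> interlace U V.
Proof.
move=> hp s0 hU hV; have ss := pat_sorted_l hp; have st := pat_sorted_r hp.
case: hp => /andP[h1 h2] h3 h4.
split; [|split].
- exists (nth 0 s 0); first by rewrite hU mem_nth.
  move=> v; rewrite hV => vt; rewrite -(nth_index 0 vt).
  have jl : (index v t < size t)%N by rewrite index_mem.
  apply: (le_lt_trans _ (h3 _ jl)); apply: le_nth => //.
  exact: (leq_trans jl h1).
- move=> a b; rewrite !hU => ha hb ab hc.
  have hc' : forall c, c \in s -> ~ (a < c < b) by move=> c cs; apply: hc; rewrite hU.
  have [i [il -> ->]] := consec ss ha hb ab hc'.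
  exists (nth 0 t i); first by rewrite hV mem_nth // -ltnS (leq_trans il h2).
  by rewrite h3 ?h4 // -ltnS (leq_trans il h2).
- move=> a b; rewrite !hV => ha hb ab hc.
  have hc' : forall c, c \in t -> ~ (a < c < b) by move=> c cs; apply: hc; rewrite hV.
  have [i [il -> ->]] := consec st ha hb ab hc'.
  exists (nth 0 s i.+1); first by rewrite hU mem_nth // (leq_trans il h1).
  by rewrite h4 ?h3 // (leq_trans il h1).
Qed.


Lemma cnt_at {r : seq R} {j} : sorted <%R r -> (j < size r)%N ->
  count (fun y => nth 0 r j < y) r = (size r - j.+1)%N.
Proof.
move=> so jl; apply: count_split => //.
- by move=> i ij; apply: le_nth => //; rewrite -ltnS.
- by move=> i /andP[ji il]; apply: lt_nth.
Qed.

Lemma key c {q r} : rr q r -> exists s, rr (Top c q) s /\ pat s r.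
Proof.
move=> h; have q0 := rr_neq0 h; have [sP lP] := Top_size c q q0.
have lq : 0 < lead_coef q by case: h.
have lP0 : 0 < lead_coef (Top c q) by rewrite lP mulr_gt0.
have so : sorted <%R r by case: h.
have szr : size r = (size q).-1 by case: h.
have rootr : forall j, (j < size r)%N -> root q (nth 0 r j).
  by move=> j jl; rewrite (rr_root h) mem_nth.
have hPj : forall j, (j < size r)%N ->
    (Top c q).[nth 0 r j] * (-1) ^+ (size r - j.+1) < 0.
  move=> j jl; rewrite hornerTop (rootP (rootr j jl)) mulr0 sub0r mulNr oppr_lt0.
  by rewrite -(cnt_at so jl); apply: sgn_deriv h _; rewrite mem_nth.
move: (size_poly_gt0 q); rewrite q0 => sq0.
case Em : (size r) => [|m].
  have sq : size q = 1%N by move: szr; rewrite Em; case: (size q) sq0 => // [[|]].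
  have [d qd] : exists d, q = d%:P.
    by exists (q`_0); apply: size1_polyC; rewrite sq.
  exists [:: - c / 2%:R]; split; last first.
    split; first by rewrite Em.
      by move=> i; rewrite Em.
    by case.
  split => //=; first by rewrite sP sq.
  rewrite andbT; apply/rootP; rewrite hornerTop qd derivC horner0 subr0 hornerC.
  have -> : 2%:R * (- c / 2%:R) + c = 0 :> R.
    by rewrite mulrC divfK ?pnatr_eq0 // addNr.
  by rewrite mul0r.
have hgap : forall i, (i.+1 < size r)%N ->
    (Top c q).[nth 0 r i] * (Top c q).[nth 0 r i.+1] < 0.
  move=> i il; have := hPj i (ltnW il); have := hPj i.+1 il.
  rewrite -(subnSK il) exprS mulN1r mulrN oppr_lt0 => h2 h1.
  by apply: (mix_neg h1 h2).
have [g [sg ag hg]] := gap_roots so hgap.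
have Pn0 : Top c q != 0 by rewrite -lead_coef_eq0 gt_eqF.
have [b rb hb] : exists2 b, nth 0 r m < b & root (Top c q) b.
  apply: right_root => //; rewrite pmulr_llt0 //.
  by have := hPj m; rewrite Em subnn expr0 mulr1 => ->.
have [a ra ha] : exists2 a, a < nth 0 r 0 & root (Top c q) a.
  apply: left_root => //.
  have := hPj 0%N; rewrite Em subn1 /= => /(_ isT) h0.
  have sq : size q = m.+2 by rewrite -[size q]prednK // -szr Em.
  rewrite sP sq /= !exprS !mulN1r opprK mulrA pmulr_llt0 //.
rewrite Em /= in sg.
have sq : size q = m.+2 by rewrite -[size q]prednK // -szr Em.
have hpat : pat (a :: rcons g b) r.
  split.
  - by rewrite /= size_rcons sg Em leqnSn leqnn.
  - case=> [|i] hi /=; first exact: ra.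
    have im : (i < size g)%N by rewrite sg -ltnS -Em.
    by rewrite nth_rcons im; case/andP: (hg i hi).
  - move=> i; rewrite /= size_rcons sg ltnS => hi.
    rewrite nth_rcons sg; case: (ltngtP i m) hi => [im _ | mi | ->].
    + have il : (i.+1 < size r)%N by rewrite Em.
      by case/andP: (hg i il).
    + by rewrite ltnS leqNgt mi.
    + by move=> _; exact: rb.
exists (a :: rcons g b); split => //; split => //.
- exact: pat_sorted_l hpat.
- by rewrite /= size_rcons sg sP sq.
- by rewrite /= all_rcons ha hb ag.
Qed.


Lemma pert_common c M {q r z} : rr q r -> rr (Top c q) z -> pat z r ->
  [/\ size z = (size r).+1, size (Top (c + M) q) = (size r).+2,
      0 < lead_coef (Top (c + M) q), sorted <%R z &
      forall k, (k < size z)%N ->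
        (Top (c + M) q).[nth 0 z k] = M * q.[nth 0 z k] /\
        0 < q.[nth 0 z k] * (-1) ^+ (size r - k)].
Proof.
move=> hq hP hp; have q0 := rr_neq0 hq.
have [sP lP] := Top_size c q q0; have [sPM lPM] := Top_size (c + M) q q0.
have lq : 0 < lead_coef q by case: hq.
have szr : size r = (size q).-1 by case: hq.
have sq : size q = (size r).+1 by rewrite szr prednK // size_poly_gt0.
have szz : size z = (size r).+1 by case: hP => _ -> _ _; rewrite sP sq.
have sz := pat_sorted_l hp; have sr := pat_sorted_r hp.
case: hp => _ h3 h4.
split => //; first by rewrite sPM sq.
  by rewrite lPM mulr_gt0.
move=> k kl; split.
  have : root (Top c q) (nth 0 z k) by rewrite (rr_root hP) mem_nth.
  move/rootP; rewrite !hornerTop => e.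
  set x := nth 0 z k; set u := q.[x]; set v := (q^`()).[x].
  have -> : (2%:R * x + (c + M)) * u - v = ((2%:R * x + c) * u - v) + M * u by ring.
  by rewrite e add0r.
have hlt : forall i, (i < k)%N -> nth 0 r i < nth 0 z k.
  move=> i ik; apply: (lt_le_trans (h4 i _)); first by rewrite (leq_ltn_trans ik kl).
  by apply: le_nth.
have hgt : forall i, (k <= i < size r)%N -> nth 0 z k < nth 0 r i.
  move=> i /andP[ki il]; apply: (le_lt_trans _ (h3 i il)).
  by apply: le_nth => //; rewrite szz (ltn_trans il).
have kr : (k <= size r)%N by rewrite -ltnS -szz.
rewrite -(count_split kr (fun i ik => ltW (hlt i ik)) hgt).
apply: (sgn_eval hq); apply/negP => /(nthP 0) [i il e].
case: (ltnP i k) => ik.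
  by move: (hlt i ik); rewrite e ltxx.
by move: (hgt i); rewrite ik il e ltxx => /(_ isT).
Qed.


Lemma pert_pos {c M q r z} : rr q r -> rr (Top c q) z -> pat z r -> 0 < M ->
  exists s, rr (Top (c + M) q) s /\ pat s z.
Proof.
move=> hq hP hp M0.
have [szz sPM lPM sz hk] := pert_common c M hq hP hp.
set m := size r in szz sPM hk.
have hv : forall k, (k < size z)%N -> 0 < (Top (c + M) q).[nth 0 z k] * (-1) ^+ (m - k).
  by move=> k kl; have [-> h] := hk k kl; rewrite -mulrA mulr_gt0.
have hgap : forall i, (i.+1 < size z)%N ->
    (Top (c + M) q).[nth 0 z i] * (Top (c + M) q).[nth 0 z i.+1] < 0.
  move=> i il; have := hv i (ltnW il); have := hv i.+1 il.
  have im : (i < m)%N by rewrite -ltnS -szz.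
  rewrite -(subnSK im) exprS mulN1r mulrN oppr_gt0 => h2 h1.
  rewrite mulrC; exact: (mix_neg h2 h1).
have [g [sg ag hg]] := gap_roots sz hgap.
have PM0 : Top (c + M) q != 0 by rewrite -lead_coef_eq0 gt_eqF.
have [a ra ha] : exists2 a, a < nth 0 z 0 & root (Top (c + M) q) a.
  apply: left_root => //.
  have := hv 0%N; rewrite szz subn0 => /(_ isT) h0.
  rewrite sPM /= exprS mulN1r mulNr mulrN mulrA oppr_lt0 pmulr_lgt0 //.
rewrite szz /= in sg.
have hpat : pat (a :: g) z.
  split.
  - by rewrite /= sg szz leqnn leqnSn.
  - case=> [|i] hi /=; first exact: ra.
    by case/andP: (hg i hi).
  - move=> i; rewrite /= sg => hi.
    have il : (i.+1 < size z)%N by rewrite szz ltnS.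
    by case/andP: (hg i il).
exists (a :: g); split => //; split => //.
- exact: pat_sorted_l hpat.
- by rewrite /= sg sPM.
- by rewrite /= ha ag.
Qed.

Lemma pert_neg {c M q r z} : rr q r -> rr (Top c q) z -> pat z r -> M < 0 ->
  exists s, rr (Top (c + M) q) s /\ pat z s.
Proof.
move=> hq hP hp M0.
have [szz sPM lPM sz hk] := pert_common c M hq hP hp.
set m := size r in szz sPM hk.
have hv : forall k, (k < size z)%N -> (Top (c + M) q).[nth 0 z k] * (-1) ^+ (m - k) < 0.
  by move=> k kl; have [-> h] := hk k kl; rewrite -mulrA nmulr_rlt0.
have hgap : forall i, (i.+1 < size z)%N ->
    (Top (c + M) q).[nth 0 z i] * (Top (c + M) q).[nth 0 z i.+1] < 0.
  move=> i il; have := hv i (ltnW il); have := hv i.+1 il.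
  have im : (i < m)%N by rewrite -ltnS -szz.
  rewrite -(subnSK im) exprS mulN1r mulrN oppr_lt0 => h2 h1.
  exact: (mix_neg h1 h2).
have [g [sg ag hg]] := gap_roots sz hgap.
have PM0 : Top (c + M) q != 0 by rewrite -lead_coef_eq0 gt_eqF.
have [b rb hb] : exists2 b, nth 0 z m < b & root (Top (c + M) q) b.
  apply: right_root => //.
  have := hv m; rewrite szz subnn expr0 mulr1 => /(_ (ltnSn _)) h0.
  by rewrite pmulr_llt0.
rewrite szz /= in sg.
have hpat : pat z (rcons g b).
  split.
  - by rewrite size_rcons sg szz leqnn leqnSn.
  - move=> i; rewrite size_rcons sg => hi.
    rewrite nth_rcons sg; case: (ltngtP i m) hi => [im _ | mi | ->].
    + have il : (i.+1 < size z)%N by rewrite szz.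
      by case/andP: (hg i il).
    + by rewrite ltnS leqNgt mi.
    + by move=> _; exact: rb.
  - move=> i; rewrite szz ltnS => hi.
    rewrite nth_rcons sg hi.
    have il : (i.+1 < size z)%N by rewrite szz ltnS.
    by case/andP: (hg i il).
exists (rcons g b); split => //; split => //.
- exact: pat_sorted_r hpat.
- by rewrite size_rcons sg sPM.
- by rewrite all_rcons hb ag.
Qed.


Lemma pat_le s z : pat s z -> size s = size z -> forall k, nth 0 s k <= nth 0 z k.
Proof.
case=> _ h3 _ e k; case: (ltnP k (size z)) => kz; first exact/ltW/h3.
by rewrite !nth_default // e.
Qed.

Lemma Hpert {phi : nat -> R} {l} M {n} : (1 <= l <= n.+1)%N ->
  Hpoly (perturb phi l M) n.+1 = Top (phi l + M) (Hpoly (remove_at phi l) n).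
Proof.
move=> hl; rewrite (Hrem hl) /perturb eqxx; congr Top.
apply: eq_Hpoly => i _; rewrite /remove_at /perturb.
case: ltnP => il.
  by rewrite (ltn_eqF il) addr0.
by rewrite gtn_eqF ?addr0 // ltnS.
Qed.

Lemma H1 (phi : nat -> R) n : exists s, rr (Hpoly phi n) s.
Proof.
elim: n => [|n [r hr]].
  by exists [::]; split => //=; rewrite ?size_poly1 ?lead_coef1.
by have [s [hs _]] := key (phi n.+1) hr; exists s; rewrite HpolyS.
Qed.

Lemma Hz {phi : nat -> R} {n s} : zero_seq (Hpoly phi n) s -> rr (Hpoly phi n) s.
Proof.
case=> so hs; have [s0 h0] := H1 phi n.
suff -> : s = s0 by [].
have s0s : sorted <%R s0 by case: h0.
apply: (irr_sorted_eq ltr_trans_rel (fun x => ltxx x) so s0s).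
by move=> x; rewrite -hs (rr_root h0).
Qed.

Lemma rr_size {phi : nat -> R} {n s} : rr (Hpoly phi n) s -> size s = n.
Proof. by case=> _ -> _ _; have [-> _] := size_H phi n. Qed.

End S.

Theorem theorem3p6 (R : realType) :
  (* (1a) H_n^phi has n real simple zeros *)
  (forall (phi : nat -> R) (n : nat), exists s : seq R,
     [/\ sorted <%R s, size s = n &
         Hpoly phi n = lead_coef (Hpoly phi n) *: \prod_(x <- s) ('X - x%:P)]) /\
  (* (1b) zeros of H_{n+1}^phi interlace zeros of H_n^{phi^{l}} *)
  (forall (phi : nat -> R) (n l : nat), (1 <= l)%N ->
     interlace (root (Hpoly phi n.+1)) (root (Hpoly (remove_at phi l) n))) /\
  (* (2) monotonicity of zeros *)
  (forall (phi rho : nat -> R) (n : nat),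
     (forall j, (1 <= j)%N -> phi j <= rho j) ->
     forall sphi srho : seq R,
       zero_seq (Hpoly phi n) sphi -> zero_seq (Hpoly rho n) srho ->
       forall k, (1 <= k <= n)%N -> nth 0 srho k.-1 <= nth 0 sphi k.-1) /\
  (* (3) perturbation of a single parameter *)
  (forall (phi : nat -> R) (l n : nat) (M : R),
     (1 <= l)%N -> (l <= n)%N -> M != 0 ->
     (0 < M -> interlace (root (Hpoly (perturb phi l M) n)) (root (Hpoly phi n))) /\
     (M < 0 -> interlace (root (Hpoly phi n)) (root (Hpoly (perturb phi l M) n)))).
Proof.
split; [|split; [|split]].
- move=> phi n; have [s hs] := H1 phi n; exists s; split.
  + by case: hs.
  + exact: rr_size hs.
  + exact: rr_fact hs.
- move=> phi n l l1; have [c ->] := Hrem_ex phi n l l1.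
  have [r hr] := H1 (remove_at phi l) n.
  have [s [hs hp]] := key c hr.
  apply: (pat_interlace hp); last by move=> x; rewrite (rr_root hr).
    have q0 := rr_neq0 hr; case: (hs) => _ -> _ _.
    by have [-> _] := Top_size c _ q0; rewrite /= size_poly_gt0.
  by move=> x; rewrite (rr_root hs).
- move=> phi rho n hle sphi srho zphi zrho k _.
  have hphi := Hz zphi; have hrho := Hz zrho.
  pose psi (j : nat) := fun i => if (i <= j)%N then rho i else phi i.
  suff claim : forall j s, rr (Hpoly (psi j) n) s -> forall k, nth 0 s k <= nth 0 sphi k.
    apply: (claim n); suff -> : Hpoly (psi n) n = Hpoly rho n by [].
    by apply: eq_Hpoly => i /andP[_ ni]; rewrite /psi ni.
  elim=> [|j IH] s hs k'.
    have e : Hpoly (psi 0%N) n = Hpoly phi n.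
      by apply: eq_Hpoly => i /andP[i0 _]; rewrite /psi leqNgt i0.
    by rewrite e in hs; rewrite (rr_uniq hs hphi).
  case: (leqP j.+1 n) => jn; last first.
    have e : Hpoly (psi j.+1) n = Hpoly (psi j) n.
      apply: eq_Hpoly => i /andP[_ i0]; rewrite /psi (leq_trans i0 (ltnW jn)).
      by rewrite (leq_trans i0 _) // -ltnS.
    by rewrite e in hs; apply: IH.
  set M := rho j.+1 - phi j.+1.
  have M0 : 0 <= M by rewrite subr_ge0 hle.
  have e : Hpoly (psi j.+1) n = Hpoly (perturb (psi j) j.+1 M) n.
    apply: eq_Hpoly => i _; rewrite /psi /perturb.
    case: (ltngtP i j.+1) => ij.
    - by rewrite -ltnS ij addr0.
    - by rewrite leqNgt (ltnW ij) addr0.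
    - by rewrite ij ltnn /M addrC subrK.
  case: n jn hle hphi hrho zphi zrho e hs IH => [//|n] jn hle hphi hrho zphi zrho e hs IH.
  have hl : (1 <= j.+1 <= n.+1)%N by rewrite jn.
  rewrite e (Hpert M hl) in hs.
  have [r hr] := H1 (remove_at (psi j) j.+1) n.
  have [z [hz hp]] := key (psi j j.+1) hr.
  have hz' : rr (Hpoly (psi j) n.+1) z by rewrite (Hrem hl).
  apply: (le_trans _ (IH z hz' k')).
  case: (eqVneq M 0) => [M00 | Mn0].
    by move: hs; rewrite M00 addr0 => hs; rewrite (rr_uniq hs hz).
  have Mp : 0 < M by rewrite lt_neqAle eq_sym Mn0 M0.
  have [s' [hs' hp']] := pert_pos hr hz hp Mp.
  rewrite (rr_uniq hs hs'); apply: pat_le => //.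
  rewrite -(Hpert M hl) -e in hs'.
  by rewrite (rr_size hs') (rr_size hz').
- move=> phi l n M l1 ln M0; case: n ln => [|n] ln; first by rewrite leqn0 in ln; move: l1; rewrite (eqP ln).
  have hl : (1 <= l <= n.+1)%N by rewrite l1 ln.
  rewrite (Hpert M hl) (Hrem hl).
  have [r hr] := H1 (remove_at phi l) n.
  have [z [hz hp]] := key (phi l) hr.
  have zs : (0 < size z)%N.
    by move: hz; rewrite -(Hrem hl) => /rr_size ->.
  split => hM.
  + have [s [hs hp']] := pert_pos hr hz hp hM.
    apply: (pat_interlace hp'); first by case: hp' => /andP[+ _] _ _; apply: leq_trans.
      by move=> x; rewrite (rr_root hs).
    by move=> x; rewrite (rr_root hz).
  + have [s [hs hp']] := pert_neg hr hz hp hM.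
    apply: (pat_interlace hp') => //.
      by move=> x; rewrite (rr_root hz).
    by move=> x; rewrite (rr_root hs).
Qed.
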